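(* Let $M$ be a $2\times2$ quaternionic matrix and $A\in SL_2\mathcal{V}$. Then $\mathrm{pdet}(AM)=\mathrm{pdet}(M)$.
   Context: For $q=a+bi+cj+dk\in\mathbb{H}$, $q^*=a+bi+cj-dk$. $\mathcal{V}=\mathrm{span}_\mathbb{R}\{1,i,j\}$. For a quaternionic matrix $\begin{pmatrix}a&b\\c&d\end{pmatrix}$, $\mathrm{pdet}=a^*d-c^*b$. $SL_2\mathcal{V}$ is the set of quaternionic matrices $\begin{pmatrix}a&b\\c&d\end{pmatrix}$ with $ab^*,cd^*,c^*a,d^*b,ba^*,dc^*,a^*c,b^*d\in\mathcal{V}$ and $ad^*-bc^*=da^*-cb^*=d^*a-b^*c=a^*d-c^*b=1$. *)

(* Defs.v *)
From mathcomp Require Import all_boot all_order all_algebra.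
From mathcomp Require Import reals.
Set Implicit Arguments. Unset Strict Implicit. Unset Printing Implicit Defensive.
Import GRing.Theory Num.Theory.
Local Open Scope ring_scope.

(* q = q0 + q1 i + q2 j + q3 k *)
Record quat (R : realType) := Quat { q0 : R; q1 : R; q2 : R; q3 : R }.

Section Quat.
Variable R : realType.
Implicit Types p q : quat R.

Definition qone : quat R := Quat 1 0 0 0.
Definition qadd p q : quat R :=
  Quat (q0 p + q0 q) (q1 p + q1 q) (q2 p + q2 q) (q3 p + q3 q).
Definition qopp q : quat R := Quat (- q0 q) (- q1 q) (- q2 q) (- q3 q).
Definition qsub p q : quat R := qadd p (qopp q).
(* Hamilton product: i^2 = j^2 = k^2 = ijk = -1 *)
Definition qmul p q : quat R :=
  Quat (q0 p * q0 q - q1 p * q1 q - q2 p * q2 q - q3 p * q3 q)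
       (q0 p * q1 q + q1 p * q0 q + q2 p * q3 q - q3 p * q2 q)
       (q0 p * q2 q - q1 p * q3 q + q2 p * q0 q + q3 p * q1 q)
       (q0 p * q3 q + q1 p * q2 q - q2 p * q1 q + q3 p * q0 q).
Definition qstar q : quat R := Quat (q0 q) (q1 q) (q2 q) (- q3 q).
Definition inV q : Prop := q3 q = 0.
End Quat.

Record mat2 (R : realType) := Mat2 { ma : quat R; mb : quat R; mc : quat R; md : quat R }.

Section Mat2.
Variable R : realType.
Implicit Types A M : mat2 R.

Definition mmul A M : mat2 R :=
  Mat2 (qadd (qmul (ma A) (ma M)) (qmul (mb A) (mc M)))
       (qadd (qmul (ma A) (mb M)) (qmul (mb A) (md M)))
       (qadd (qmul (mc A) (ma M)) (qmul (md A) (mc M)))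
       (qadd (qmul (mc A) (mb M)) (qmul (md A) (md M))).

Definition pdet M : quat R :=
  qsub (qmul (qstar (ma M)) (md M)) (qmul (qstar (mc M)) (mb M)).

Definition SL2V A : Prop :=
  let a := ma A in let b := mb A in let c := mc A in let d := md A in
  (inV (qmul a (qstar b)) /\ inV (qmul c (qstar d)) /\ inV (qmul (qstar c) a) /\
   inV (qmul (qstar d) b) /\ inV (qmul b (qstar a)) /\ inV (qmul d (qstar c)) /\
   inV (qmul (qstar a) c) /\ inV (qmul (qstar b) d)) /\
  (qsub (qmul a (qstar d)) (qmul b (qstar c)) = qone R /\
   qsub (qmul d (qstar a)) (qmul c (qstar b)) = qone R /\
   qsub (qmul (qstar d) a) (qmul (qstar b) c) = qone R /\
   qsub (qmul (qstar a) d) (qmul (qstar c) b) = qone R).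
End Mat2.

(* Main.v *)
Require Import Defs.
From mathcomp Require Import all_boot all_order all_algebra.
From mathcomp Require Import reals.
From mathcomp Require Import ring lra.
Import GRing.Theory Num.Theory.
Local Open Scope ring_scope.

Section H.
Variable R : realType.

Lemma quatE (p q : quat R) : q0 p = q0 q -> q1 p = q1 q -> q2 p = q2 q -> q3 p = q3 q -> p = q.
Proof. by case: p; case: q => /= ? ? ? ? ? ? ? ? -> -> -> ->. Qed.

Lemma key (a b c d m11 m12 m21 m22 : quat R) :
  pdet (mmul (Mat2 a b c d) (Mat2 m11 m12 m21 m22)) =
  qadd (qadd (qmul (qmul (qstar m11) (qsub (qmul (qstar a) c) (qmul (qstar c) a))) m12)
             (qmul (qmul (qstar m11) (qsub (qmul (qstar a) d) (qmul (qstar c) b))) m22))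
       (qadd (qmul (qmul (qstar m21) (qsub (qmul (qstar b) c) (qmul (qstar d) a))) m12)
             (qmul (qmul (qstar m21) (qsub (qmul (qstar b) d) (qmul (qstar d) b))) m22)).
Proof.
case: a b c d m11 m12 m21 m22 => [? ? ? ?] [? ? ? ?] [? ? ? ?] [? ? ? ?] [? ? ? ?] [? ? ? ?] [? ? ? ?] [? ? ? ?].
apply: quatE; rewrite /=; ring.
Qed.

Lemma Vsub (x y : quat R) : inV (qmul (qstar x) y) ->
  qsub (qmul (qstar x) y) (qmul (qstar y) x) = Quat 0 0 0 0.
Proof.
case: x y => [x0 x1 x2 x3] [y0 y1 y2 y3].
rewrite /inV /= => H.
apply: quatE; rewrite /=; try ring.
move: H; rewrite /=; lra.
Qed.

Lemma qsub_swap (x y : quat R) : qsub y x = qopp (qsub x y).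
Proof. case: x y => [? ? ? ?] [? ? ? ?]; apply: quatE; rewrite /=; ring. Qed.

Lemma fin (m11 m12 m21 m22 : quat R) :
  qadd (qadd (qmul (qmul (qstar m11) (Quat 0 0 0 0)) m12)
             (qmul (qmul (qstar m11) (qone R)) m22))
       (qadd (qmul (qmul (qstar m21) (qopp (qone R))) m12)
             (qmul (qmul (qstar m21) (Quat 0 0 0 0)) m22)) =
  pdet (Mat2 m11 m12 m21 m22).
Proof.
case: m11 m12 m21 m22 => [? ? ? ?] [? ? ? ?] [? ? ? ?] [? ? ? ?].
apply: quatE; rewrite /=; ring.
Qed.

End H.

Theorem lemma3p20 (R : realType) (A M : mat2 R) :
  SL2V A -> pdet (mmul A M) = pdet M.
Proof.
case: A => a b c d; case: M => m11 m12 m21 m22.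
move=> /= [[_ [_ [_ [_ [_ [_ [H2 H3]]]]]]] [_ [_ [E1 E2]]]].
rewrite key (@Vsub _ _ _ H2) (@Vsub _ _ _ H3) E2 qsub_swap E1.
exact: fin.
Qed.
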